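(* Under the triangle scaling property with constant $G\ge1$, the iterates of acc-BPP3 satisfy, for every $k\ge0$ and every $\lambda\in\Lambda$, $$d(\lambda)-d(\lambda_{k+1})\le\frac{G\,D_h(\lambda,\lambda_0)}{S_k}=\frac{\theta_k^2\,G\,D_h(\lambda,\lambda_0)}{\eta_k},\qquad S_k=\sum_{j=0}^k\frac{\eta_j}{\theta_j}.$$
   Context: $\Lambda\subseteq\mathbb{R}^m$ closed convex, $d:\Lambda\to\mathbb{R}$ concave. $h$ strictly convex, continuously differentiable on $\Lambda$, $D_h(\lambda,\tilde\lambda)=h(\lambda)-h(\tilde\lambda)-\nabla h(\tilde\lambda)^\top(\lambda-\tilde\lambda)$. Triangle scaling property with constant $G$: $D_h((1-\theta)\lambda+\theta\lambda_1,(1-\theta)\lambda+\theta\lambda_2)\le G\theta^2D_h(\lambda_1,\lambda_2)$ for all $\lambda,\lambda_1,\lambda_2\in\Lambda$, $\theta\in[0,1]$. Algorithm acc-BPP3: given $\lambda_0\in\Lambda$, $v_0=\lambda_0$, $\theta_0=1$, $\eta_k>0$; for $k\ge0$: $y_k=\theta_kv_k+(1-\theta_k)\lambda_k$; $\lambda_{k+1}\in\arg\max_{\lambda\in\Lambda}\{d(\lambda)-\frac1{\eta_k}D_h(\lambda,y_k)\}$; $v_{k+1}\in\arg\max_{\lambda\in\Lambda}\big\{-GD_h(\lambda,\lambda_0)+\sum_{j=0}^k\frac{\eta_j}{\theta_j}\big(d(\lambda_{j+1})+\frac1{\eta_j}(\nabla h(\lambda_{j+1})-\nabla h(y_j))^\top(\lambda-\lambda_{j+1})\big)\big\}$;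 $\theta_{k+1}\in(0,1]$ is defined by $\frac{\eta_k}{\theta_k^2}=\frac{\eta_{k+1}}{\theta_{k+1}^2}-\frac{\eta_{k+1}}{\theta_{k+1}}$. All maximizers are assumed to exist. *)

(* Defs.v *)
(* R^m is rendered as 'rV[R]_m over an arbitrary real field R. *)
From HB Require Import structures.
From mathcomp Require Import all_boot all_order all_algebra.
Set Implicit Arguments. Unset Strict Implicit. Unset Printing Implicit Defensive.
Import Order.TTheory GRing.Theory Num.Theory.
Local Open Scope ring_scope.

Section Defs.
Variables (R : realFieldType) (m : nat).
Local Notation vec := 'rV[R]_m.

Definition dotv (a b : vec) : R := \sum_(i < m) a 0 i * b 0 i.

(* l1 norm (all norms on R^m are equivalent; used only for limits) *)
Definition norm1 (a : vec) : R := \sum_(i < m) `|a 0 i|.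

Definition convex_set (L : vec -> Prop) : Prop :=
  forall x y t, L x -> L y -> 0 <= t -> t <= 1 -> L ((1 - t) *: x + t *: y).

Definition closed_set (L : vec -> Prop) : Prop :=
  forall x, (forall e, 0 < e -> exists y, L y /\ norm1 (y - x) < e) -> L x.

Definition concave_on (L : vec -> Prop) (f : vec -> R) : Prop :=
  forall x y t, L x -> L y -> 0 <= t -> t <= 1 ->
    (1 - t) * f x + t * f y <= f ((1 - t) *: x + t *: y).

Definition strictly_convex_on (L : vec -> Prop) (f : vec -> R) : Prop :=
  forall x y t, L x -> L y -> x != y -> 0 < t -> t < 1 ->
    f ((1 - t) *: x + t *: y) < (1 - t) * f x + t * f y.

Definition has_gradient_at (f : vec -> R) (g x : vec) : Prop :=
  forall e, 0 < e -> exists2 del, 0 < del & forall y, norm1 (y - x) < del ->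
    `|f y - f x - dotv g (y - x)| <= e * norm1 (y - x).

Definition C1_on (L : vec -> Prop) (f : vec -> R) (gf : vec -> vec) : Prop :=
  (forall x, L x -> has_gradient_at f (gf x) x) /\
  (forall x, L x -> forall e, 0 < e -> exists2 del, 0 < del &
     forall y, L y -> norm1 (y - x) < del -> norm1 (gf y - gf x) < e).

Definition bregman (h : vec -> R) (gh : vec -> vec) (l lt : vec) : R :=
  h l - h lt - dotv (gh lt) (l - lt).

Definition triangle_scaling (L : vec -> Prop) (h : vec -> R) (gh : vec -> vec)
  (G : R) : Prop :=
  forall l l1 l2 t, L l -> L l1 -> L l2 -> 0 <= t -> t <= 1 ->
    bregman h gh ((1 - t) *: l + t *: l1) ((1 - t) *: l + t *: l2)
      <= G * t ^+ 2 * bregman h gh l1 l2.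

Definition is_argmax (L : vec -> Prop) (f : vec -> R) (x : vec) : Prop :=
  L x /\ forall z, L z -> f z <= f x.

End Defs.

(* Main.v *)
Require Import Defs.
From HB Require Import structures.
From mathcomp Require Import all_boot all_order all_algebra.
From mathcomp Require Import ring lra.
Import Order.TTheory GRing.Theory Num.Theory.
Local Open Scope ring_scope.

Lemma dotvDr (R : realFieldType) m (a b c : 'rV[R]_m) :
  dotv a (b + c) = dotv a b + dotv a c.
Proof. rewrite /dotv -big_split; apply: eq_bigr => i _; by rewrite !mxE mulrDr. Qed.
Lemma dotvZr (R : realFieldType) m (a b : 'rV[R]_m) t :
  dotv a (t *: b) = t * dotv a b.
Proof. rewrite /dotv mulr_sumr; apply: eq_bigr => i _; rewrite mxE; ring. Qed.
Lemma dotvNr (R : realFieldType) m (a b : 'rV[R]_m) :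
  dotv a (- b) = - dotv a b.
Proof. rewrite /dotv -sumrN; apply: eq_bigr => i _; rewrite mxE; ring. Qed.
Lemma dotvBr (R : realFieldType) m (a b c : 'rV[R]_m) :
  dotv a (b - c) = dotv a b - dotv a c.
Proof. by rewrite dotvDr dotvNr. Qed.
Lemma dotvBl (R : realFieldType) m (a b c : 'rV[R]_m) :
  dotv (a - b) c = dotv a c - dotv b c.
Proof. rewrite /dotv -sumrB; apply: eq_bigr => i _; by rewrite !mxE mulrBl. Qed.
Lemma norm1Z (R : realFieldType) m (a : 'rV[R]_m) t : 0 <= t ->
  norm1 (t *: a) = t * norm1 a.
Proof. move=> t0; rewrite /norm1 mulr_sumr; apply: eq_bigr => i _; rewrite mxE normrM ger0_norm //. Qed.
Lemma norm1_ge0 (R : realFieldType) m (a : 'rV[R]_m) : 0 <= norm1 a.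
Proof. by apply: sumr_ge0 => i _. Qed.
Lemma vec_conv (R : realFieldType) m (x l : 'rV[R]_m) t :
  (1 - t) *: x + t *: l - x = t *: (l - x).
Proof. apply/rowP => i; rewrite !mxE; ring. Qed.

Lemma grad_near (R : realFieldType) m (h : 'rV[R]_m -> R) (g x l : 'rV[R]_m) :
  has_gradient_at h g x -> forall e, 0 < e -> exists t, [/\ 0 < t, t <= 1 &
  `|h ((1 - t) *: x + t *: l) - h x - t * dotv g (l - x)| <= t * e].
Proof.
move=> H e e0; set N := norm1 (l - x).
have N0 : 0 <= N by apply: norm1_ge0.
have [del del0 Hd] := H (e / (N + 1)) (divr_gt0 e0 (ltr_wpDl N0 ltr01)).
have Q0 : 0 < N + del + 1 by lra.
set t := del / (N + del + 1).
have t0 : 0 < t by apply: divr_gt0.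
have t1 : t <= 1 by rewrite /t ler_pdivrMr // mul1r; lra.
have tN : t * N < del.
  rewrite /t mulrAC ltr_pdivrMr //; nra.
exists t; split => //.
have := Hd ((1 - t) *: x + t *: l).
rewrite vec_conv norm1Z; last exact: ltW. rewrite dotvZr => /(_ tN) /le_trans; apply.
rewrite -/N mulrCA; apply: ler_wpM2l; first exact: ltW.
rewrite mulrAC ler_pdivrMr; [nra|lra].
Qed.

Lemma fo_lower (R : realFieldType) m (h : 'rV[R]_m -> R) (g x l : 'rV[R]_m) c :
  has_gradient_at h g x ->
  (forall t, 0 < t -> t <= 1 -> t * c <= h ((1 - t) *: x + t *: l) - h x) ->
  c <= dotv g (l - x).
Proof.
move=> H Hc; apply/ler_addgt0Pr => e e0.
have [t [t0 t1 Ht]] := @grad_near _ _ _ _ _ l H _ e0.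
have := Hc t t0 t1; move: Ht; rewrite ler_norml => /andP[_ Ht] Hc'.
have : t * c <= t * (dotv g (l - x) + e) by lra.
by rewrite ler_pM2l.
Qed.

Lemma fo_upper (R : realFieldType) m (h : 'rV[R]_m -> R) (g x l : 'rV[R]_m) c :
  has_gradient_at h g x ->
  (forall t, 0 < t -> t <= 1 -> h ((1 - t) *: x + t *: l) - h x <= t * c) ->
  dotv g (l - x) <= c.
Proof.
move=> H Hc; apply/ler_addgt0Pr => e e0.
have [t [t0 t1 Ht]] := @grad_near _ _ _ _ _ l H _ e0.
have := Hc t t0 t1; move: Ht; rewrite ler_norml => /andP[Ht _] Hc'.
have : t * dotv g (l - x) <= t * (c + e) by lra.
by rewrite ler_pM2l.
Qed.

Lemma strict_convex_weak (R : realFieldType) m (Lam : 'rV[R]_m -> Prop) h a b t :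
  strictly_convex_on Lam h -> Lam a -> Lam b -> 0 <= t -> t <= 1 ->
  h ((1 - t) *: a + t *: b) <= (1 - t) * h a + t * h b.
Proof.
move=> Hs La Lb t0 t1.
case: (eqVneq a b) => [<-|nab].
  have -> : (1 - t) *: a + t *: a = a by apply/rowP => i; rewrite !mxE; ring.
  by rewrite le_eqVlt; apply/orP; left; apply/eqP; ring.
move: t0; rewrite le_eqVlt => /orP[/eqP<-|t0].
  by rewrite subr0 scale1r scale0r addr0 mul1r mul0r addr0.
move: t1; rewrite le_eqVlt => /orP[/eqP->|t1].
  by rewrite subrr scale0r scale1r add0r mul0r mul1r add0r.
exact/ltW/Hs.
Qed.

Lemma bregman_ge0 (R : realFieldType) m (Lam : 'rV[R]_m -> Prop) h gh a b :
  convex_set Lam -> strictly_convex_on Lam h -> C1_on Lam h gh ->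
  Lam a -> Lam b -> 0 <= bregman h gh a b.
Proof.
move=> Hc Hs [Hg _] La Lb; rewrite /bregman subr_ge0.
have := @fo_upper _ _ h (gh b) b a (h a - h b) (Hg b Lb).
rewrite lerBrDl addrC; apply => t t0 t1.
have := @strict_convex_weak _ _ _ h b a t Hs Lb La (ltW t0) t1; lra.
Qed.

Lemma three_point (R : realFieldType) m h (gh : 'rV[R]_m -> 'rV[R]_m) x y z :
  dotv (gh x - gh y) (z - x) =
  bregman h gh z y - bregman h gh z x - bregman h gh x y.
Proof.
rewrite /bregman dotvBl !dotvBr; lra.
Qed.

Lemma superg (R : realFieldType) m (Lam : 'rV[R]_m -> Prop) d h gh (eta : R) y x :
  convex_set Lam -> concave_on Lam d -> C1_on Lam h gh -> 0 < eta ->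
  is_argmax Lam (fun l => d l - eta^-1 * bregman h gh l y) x ->
  forall l, Lam l -> d l <= d x + eta^-1 * dotv (gh x - gh y) (l - x).
Proof.
move=> Hc Hd [Hg _] e0 [Lx Hx] l Ll.
have ei : eta * eta^-1 = 1 by rewrite mulfV // gt_eqF.
have ei0 : 0 < eta^-1 by rewrite invr_gt0.
have := @fo_lower _ _ h (gh x) x l (eta * (d l - d x) + dotv (gh y) (l - x)) (Hg x Lx).
rewrite dotvBl.
have H : eta * (d l - d x) <= dotv (gh x) (l - x) - dotv (gh y) (l - x) ->
  d l <= d x + eta^-1 * (dotv (gh x) (l - x) - dotv (gh y) (l - x)).
  move=> H; have := ler_wpM2l (ltW ei0) H; rewrite mulrA mulVf ?gt_eqF // mul1r; lra.
move=> HH; apply: H; suff : eta * (d l - d x) + dotv (gh y) (l - x) <= dotv (gh x) (l - x) by lra.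
apply: HH => t t0 t1.
have Lt := Hc x l t Lx Ll (ltW t0) t1.
have Hm := Hx _ Lt.
have Hcv := Hd x l t Lx Ll (ltW t0) t1.
move: Hm; rewrite /bregman.
have -> : dotv (gh y) ((1 - t) *: x + t *: l - y) =
   dotv (gh y) (x - y) + t * dotv (gh y) (l - x).
  by rewrite -dotvZr -dotvDr -vec_conv; congr dotv; apply/rowP => i; rewrite !mxE; ring.
set D1 := h ((1 - t) *: x + t *: l). set g1 := dotv (gh y) (l - x).
set g2 := dotv (gh y) (x - y).
move=> Hm.
have : t * (d l - d x) <= eta^-1 * (D1 - h x - t * g1) by nra.
move/(ler_wpM2l (ltW e0)); rewrite [in X in _ <= X]mulrA ei mul1r. nra.
Qed.

Definition affine_fun (R : realFieldType) m (A : 'rV[R]_m -> R) :=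
  forall a b t, A ((1 - t) *: a + t *: b) = (1 - t) * A a + t * A b.
Arguments affine_fun {R m}.

Lemma affine_sum (R : realFieldType) m n (F : 'I_n -> 'rV[R]_m -> R) :
  (forall j, affine_fun (F j)) -> affine_fun (fun l => \sum_(j < n) F j l).
Proof.
move=> HF a b t /=.
rewrite (eq_bigr _ (fun j _ => HF j a b t)) big_split /= -!mulr_sumr //.
Qed.

Lemma affine_piece (R : realFieldType) m (g p : 'rV[R]_m) c1 c2 c3 :
  affine_fun (fun l => c1 * (c2 + c3 * dotv g (l - p))).
Proof.
move=> a b t.
have -> : (1 - t) *: a + t *: b - p = (1 - t) *: (a - p) + t *: (b - p).
  by apply/rowP => i; rewrite !mxE; ring.
rewrite (@dotvDr _ _ g ((1 - t) *: (a - p))) !dotvZr; ring.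
Qed.

Lemma psi_opt (R : realFieldType) m (Lam : 'rV[R]_m -> Prop) h gh (G : R) l0 A v :
  convex_set Lam -> C1_on Lam h gh -> 0 < G -> affine_fun A ->
  is_argmax Lam (fun l => - G * bregman h gh l l0 + A l) v ->
  forall l, Lam l -> - G * bregman h gh l l0 + A l <=
     - G * bregman h gh v l0 + A v - G * bregman h gh l v.
Proof.
move=> Hc [Hg _] G0 HA [Lv Hv] l Ll.
have Gi : G * G^-1 = 1 by rewrite mulfV // gt_eqF.
have := @fo_lower _ _ h (gh v) v l ((G * dotv (gh l0) (l - v) + A l - A v) / G) (Hg v Lv).
have E : forall p, dotv (gh l0) (p - l0) = dotv (gh l0) (v - l0) + dotv (gh l0) (p - v).
  by move=> p; rewrite -dotvDr; congr dotv; apply/rowP => i; rewrite !mxE; ring.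
move=> HH.
have H2 : (G * dotv (gh l0) (l - v) + A l - A v) <= G * dotv (gh v) (l - v).
  have := ler_wpM2l (ltW G0) (HH _).
  rewrite mulrCA Gi mulr1; apply => t t0 t1.
  have Lt := Hc v l t Lv Ll (ltW t0) t1.
  have := Hv _ Lt; rewrite /bregman HA (E ((1 - t) *: v + t *: l)) vec_conv dotvZr.
  move=> Hm.
  have : t * (G * dotv (gh l0) (l - v) + A l - A v) <= G * (h ((1 - t) *: v + t *: l) - h v) by nra.
  have Gi0 : 0 < G^-1 by rewrite invr_gt0.
  move/(ler_wpM2l (ltW Gi0)).
  rewrite mulrCA [G^-1 * (G * _)]mulrA mulVf ?gt_eqF // mul1r [_ / G]mulrC; exact.
move: H2; rewrite /bregman E; nra.
Qed.
Theorem mainTheorem8 (R : realFieldType) (m : nat)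
  (Lam : 'rV[R]_m -> Prop) (d h : 'rV[R]_m -> R) (gh : 'rV[R]_m -> 'rV[R]_m)
  (G : R) (eta theta : nat -> R) (lam v y : nat -> 'rV[R]_m) :
  closed_set Lam -> convex_set Lam ->
  concave_on Lam d ->
  strictly_convex_on Lam h -> C1_on Lam h gh ->
  1 <= G -> triangle_scaling Lam h gh G ->
  Lam (lam 0%N) -> v 0%N = lam 0%N -> theta 0%N = 1 ->
  (forall k, 0 < eta k) ->
  (forall k, y k = theta k *: v k + (1 - theta k) *: lam k) ->
  (forall k, is_argmax Lam
     (fun l => d l - (eta k)^-1 * bregman h gh l (y k)) (lam k.+1)) ->
  (forall k, is_argmax Lam
     (fun l => - G * bregman h gh l (lam 0%N) +
        \sum_(j < k.+1) eta j / theta j *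
          (d (lam j.+1) + (eta j)^-1 *
             dotv (gh (lam j.+1) - gh (y j)) (l - lam j.+1)))
     (v k.+1)) ->
  (forall k, 0 < theta k.+1 /\ theta k.+1 <= 1) ->
  (forall k, eta k / theta k ^+ 2 =
             eta k.+1 / theta k.+1 ^+ 2 - eta k.+1 / theta k.+1) ->
  forall k l, Lam l ->
    let S := \sum_(j < k.+1) eta j / theta j in
    d l - d (lam k.+1) <= G * bregman h gh l (lam 0%N) / S /\
    G * bregman h gh l (lam 0%N) / S =
      theta k ^+ 2 * G * bregman h gh l (lam 0%N) / eta k.
Proof.
move=> Hcl Hc Hd Hs HC1 G1 Hts L0 v0 th0 eta0 Hy Hlam Hv Hth Hrec.
have G0 : 0 < G by lra.
have thp : forall k, 0 < theta k by case=> [|k]; [rewrite th0 ltr01 | exact: (Hth k).1].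
have th1 : forall k, theta k <= 1 by case=> [|k]; [rewrite th0 | exact: (Hth k).2].
have Llam : forall k, Lam (lam k) by case=> [|k] //; exact: (Hlam k).1.
have Lv : forall k, Lam (v k.+1) by move=> k; exact: (Hv k).1.
have Dge0 : forall a b, Lam a -> Lam b -> 0 <= bregman h gh a b.
  by move=> a b La Lb; exact: (@bregman_ge0 _ _ Lam h gh a b Hc Hs HC1).
pose a j := eta j / theta j.
pose S k := \sum_(j < k.+1) a j.
have SS : forall k, S k.+1 = S k + a k.+1 by move=> k; rewrite /S big_ord_recr.
have Seq : forall k, S k = eta k / theta k ^+ 2.
  elim=> [|k IH]; first by rewrite /S big_ord1 /a th0 expr1n.
  by rewrite SS IH Hrec /a; ring.
have Spos : forall k, 0 < S k.
  by move=> k; rewrite Seq; apply: divr_gt0 => //; apply: exprn_gt0.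
pose ell j l := d (lam j.+1) + (eta j)^-1 * dotv (gh (lam j.+1) - gh (y j)) (l - lam j.+1).
pose psi k l := - G * bregman h gh l (lam 0%N) + \sum_(j < k.+1) a j * ell j l.
have Hsg : forall j l, Lam l -> d l <= ell j l.
  by move=> j l Ll; exact: (@superg _ _ Lam d h gh (eta j) (y j) (lam j.+1) Hc Hd HC1 (eta0 j) (Hlam j) l Ll).
have Hpo : forall k l, Lam l -> psi k l <= psi k (v k.+1) - G * bregman h gh l (v k.+1).
  move=> k l Ll.
  apply: (@psi_opt _ _ Lam h gh G (lam 0%N) (fun l => \sum_(j < k.+1) a j * ell j l)
            (v k.+1) Hc HC1 G0 _ (Hv k) l Ll).
  apply: affine_sum => j; rewrite /ell; exact: affine_piece.
have claim : forall k, psi k (v k.+1) <= S k * d (lam k.+1).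
  elim=> [|k IH].
    rewrite /psi /S !big_ord1 /a th0 divr1 /ell.
    have -> : y 0%N = lam 0%N.
      by rewrite Hy v0 th0 subrr scale0r scale1r addr0.
    rewrite (@three_point _ _ h).
    have e1 : eta 0%N * (eta 0%N)^-1 = 1 by rewrite mulfV // gt_eqF.
    have := Dge0 (v 1%N) (lam 0%N) (Lv 0%N) L0.
    have := Dge0 (v 1%N) (lam 1%N) (Lv 0%N) (Llam 1%N).
    have := Dge0 (lam 1%N) (lam 0%N) (Llam 1%N) L0.
    set A1 := bregman h gh (v 1%N) (lam 0%N).
    set A2 := bregman h gh (v 1%N) (lam 1%N).
    set A3 := bregman h gh (lam 1%N) (lam 0%N).
    move=> h3 h2 h1.
rewrite [eta _ * (_ + _)]mulrDr [eta _ * (_ * _)]mulrA e1 mul1r; nra.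
  set th := theta k.+1. set e := eta k.+1.
  have thp' : 0 < th := thp k.+1.
  have ep : 0 < e := eta0 k.+1.
  have E1 : psi k.+1 (v k.+2) = psi k (v k.+2) + a k.+1 * ell k.+1 (v k.+2).
    by rewrite /psi big_ord_recr /= addrA.
  have H1 := Hpo k (v k.+2) (Lv k.+1).
  have H2 := Hsg k.+1 (lam k.+1) (Llam k.+1).
  have H2' : S k * d (lam k.+1) <= S k * ell k.+1 (lam k.+1).
    by apply: ler_wpM2l => //; apply: ltW.
  set z := (1 - th) *: lam k.+1 + th *: v k.+2.
  have Haff : ell k.+1 z = (1 - th) * ell k.+1 (lam k.+1) + th * ell k.+1 (v k.+2).
    have := @affine_piece _ _ (gh (lam k.+2) - gh (y k.+1)) (lam k.+2) 1
      (d (lam k.+2)) (e^-1) (lam k.+1) (v k.+2) th.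
    by rewrite !mul1r.
  have Lz : Lam z by apply: Hc; [exact: Llam | exact: Lv | exact: ltW | exact: th1].
  have Ly : Lam (y k.+1).
    by rewrite Hy addrC; apply: Hc; [exact: Llam | exact: Lv | exact: ltW | exact: th1].
  have Hts' : bregman h gh z (y k.+1) <= G * th ^+ 2 * bregman h gh (v k.+2) (v k.+1).
    rewrite Hy addrC; apply: Hts; [exact: Llam | exact: Lv | exact: Lv | exact: ltW | exact: th1].
  have Hz : ell k.+1 z <= d (lam k.+2) + e^-1 * (G * th ^+ 2 * bregman h gh (v k.+2) (v k.+1)).
    rewrite /ell (@three_point _ _ h); rewrite lerD2l; apply: ler_wpM2l.
      by rewrite invr_ge0 ltW.
    have := Dge0 z (lam k.+2) Lz (Llam k.+2).
    have := Dge0 (lam k.+2) (y k.+1) (Llam k.+2) Ly.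
    lra.
  have Hz' := ler_wpM2l (ltW (Spos k.+1)) Hz.
  have key : S k * ell k.+1 (lam k.+1) + a k.+1 * ell k.+1 (v k.+2) = S k.+1 * ell k.+1 z.
    have Sk : S k = S k.+1 - a k.+1 by rewrite SS; ring.
    rewrite Haff Sk Seq /a -/th -/e; field; by rewrite gt_eqF.
  have key2 : S k.+1 * (e^-1 * (G * th ^+ 2 * bregman h gh (v k.+2) (v k.+1))) =
     G * bregman h gh (v k.+2) (v k.+1).
    rewrite Seq -/th -/e; field.
    by rewrite !gt_eqF.
  move: Hz'; rewrite [in X in _ <= X]mulrDr key2 => Hz'.
  rewrite E1; lra.
move=> k l Ll /=.
have Hlow : S k * d l - G * bregman h gh l (lam 0%N) <= psi k l.
  suff : S k * d l <= \sum_(j < k.+1) a j * ell j l by rewrite /psi; lra.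
  rewrite /S mulr_suml; apply: ler_sum => j _.
  apply: ler_wpM2l; last exact: Hsg.
  by apply: divr_ge0; apply: ltW.
have := Hpo k l Ll.
have := claim k.
have := Dge0 l (v k.+1) Ll (Lv k).
move=> h1 h2 h3.
have Hf : (d l - d (lam k.+1)) * S k <= G * bregman h gh l (lam 0%N).
  have := mulr_ge0 (ltW G0) h1; rewrite mulrBl ![_ * S k]mulrC; lra.
split; first by rewrite ler_pdivlMr; [exact: Hf | exact: (Spos k)].
rewrite -/(S k) Seq; field.
by rewrite !gt_eqF.
Qed.
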